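(* Let $K$ be a field (e.g. $K=\mathbb{C}$), let $r\geqslant 0$ be an integer, and let $\{a_0(n)\}_{n\in\mathbb{Z}},\ldots,\{a_r(n)\}_{n\in\mathbb{Z}}$ be arbitrary sequences of elements of $K$. Let $V$ be the $K$-vector space of all sequences $\{x(n)\}_{n\in\mathbb{Z}}$ of elements of $K$ satisfying \[ a_r(n)x(n+r)+\ldots+a_1(n)x(n+1)+a_0(n)x(n)=0\quad\text{for every } n\in\mathbb{Z}. \] Assume $\dim_K V=\infty$. Then there exists a ray $\mathcal{S}\subseteq\mathbb{Z}$, i.e. a set of the form $\{i\in\mathbb{Z}\mid i\geqslant i_0\}$ or $\{i\in\mathbb{Z}\mid i\leqslant i_0\}$ for some $i_0\in\mathbb{Z}$, such that the subspace of $V$ consisting of the sequences whose support is contained in $\mathcal{S}$ is infinite-dimensional.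
   Context: The support of a sequence $\{x(n)\}_{n\in\mathbb{Z}}$ is $\{i\in\mathbb{Z}\mid x(i)\neq 0\}$. *)

(* Defs.v *)
From mathcomp Require Import all_boot all_order all_algebra.
Set Implicit Arguments. Unset Strict Implicit. Unset Printing Implicit Defensive.
Import Order.TTheory GRing.Theory Num.Theory.
Local Open Scope ring_scope.

(* x : int -> K satisfies  sum_{j=0}^r a_j(n) x(n+j) = 0  for every n in Z.
   The coefficient sequences a_0,...,a_r are given as a : nat -> int -> K
   (only a 0, ..., a r are used). *)
Definition in_V (K : fieldType) (r : nat) (a : nat -> int -> K) (x : int -> K) : Prop :=
  forall n : int, \sum_(j < r.+1) a j n * x (n + (j : nat)%:Z) = 0.

Definition lin_indep (K : fieldType) (m : nat) (x : 'I_m -> int -> K) : Prop :=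
  forall c : 'I_m -> K,
    (forall k : int, \sum_(i < m) c i * x i k = 0) -> forall i, c i = 0.

Definition inf_dim (K : fieldType) (W : (int -> K) -> Prop) : Prop :=
  forall m : nat, exists x : 'I_m -> int -> K, (forall i, W (x i)) /\ lin_indep x.

Definition supp_sub (K : fieldType) (x : int -> K) (S : int -> Prop) : Prop :=
  forall i : int, x i != 0 -> S i.

(* Main.v *)
Require Import Defs.
From mathcomp Require Import all_boot all_order all_algebra.
From mathcomp Require Import zify.
From Stdlib Require Import Classical.
Import Order.TTheory GRing.Theory Num.Theory.
Set Implicit Arguments. Unset Strict Implicit. Unset Printing Implicit Defensive.
Local Open Scope ring_scope.

Section Aux.
Variable K : fieldType.

Definition comb N (c : 'rV[K]_N) (y : 'I_N -> int -> K) (k : int) :=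
  \sum_(i < N) c 0 i * y i k.

Lemma sum_reindex n m (w : 'I_m -> 'I_n) (d : 'I_m -> K) (f : 'I_n -> K) :
  \sum_(j < n) (\sum_(i < m | w i == j) d i) * f j = \sum_(i < m) d i * f (w i).
Proof.
under eq_bigr do rewrite big_distrl big_mkcond /=.
rewrite exchange_big /=; apply: eq_bigr => i _.
rewrite -big_mkcond /=.
rewrite (eq_bigl (fun j => j == w i)) ?big_pred1_eq // => j.
Qed.

Lemma subfam n m (h : (m <= n)%N) (z : 'I_n -> int -> K) :
  lin_indep z -> lin_indep (fun i : 'I_m => z (widen_ord h i)).
Proof.
move=> hz c hc i.
pose d j := \sum_(i' < m | widen_ord h i' == j) c i'.
have hd : forall k, \sum_(j < n) d j * z j k = 0.
  by move=> k; rewrite /d sum_reindex.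
have := hz d hd (widen_ord h i); rewrite /d.
rewrite (eq_bigl (fun i' => i' == i)) ?big_pred1_eq //.
Qed.

Lemma famA N p (y : 'I_N -> int -> K) (S : 'M[K]_(p, N)) (W : (int -> K) -> Prop) :
  (forall c : 'rV_N, (c <= S)%MS -> W (comb c y)) ->
  (forall c : 'rV_N, (c <= S)%MS -> (forall k, comb c y k = 0) -> c = 0) ->
  exists z : 'I_(\rank S) -> int -> K, (forall i, W (z i)) /\ lin_indep z.
Proof.
move=> hW hinj.
pose B := row_base S.
have hBS : (B <= S)%MS by rewrite eq_row_base.
exists (fun j => comb (row j B) y); split.
  by move=> j; apply: hW; apply: submx_trans (row_sub _ _) hBS.
move=> d hd.
pose dv : 'rV_(\rank S) := \row_j d j.
have hc : dv *m B = 0.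
  apply: hinj; first by apply: submx_trans (submxMl _ _) hBS.
  move=> k; rewrite -(hd k) /comb.
  under eq_bigr do rewrite mxE big_distrl /=.
  rewrite exchange_big /=; apply: eq_bigr => j _.
  rewrite big_distrr /=; apply: eq_bigr => i _.
  by rewrite !mxE mulrA.
have : dv = 0 by apply: (row_free_inj (row_base_free S)); rewrite hc mul0mx.
by move=> /rowP h j; have := h j; rewrite !mxE.
Qed.


Definition Mw N (y : 'I_N -> int -> K) L : 'M[K]_(N, (L+L).+1) :=
  \matrix_(i, j) y i (j%:Z - L%:Z).

Lemma kerwP N (y : 'I_N -> int -> K) L (c : 'rV_N) :
  reflect (forall j : 'I_(L+L).+1, comb c y (j%:Z - L%:Z) = 0)
          (c <= kermx (Mw y L))%MS.
Proof.
rewrite sub_kermx; apply: (iffP eqP) => [h j | h].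
  move/rowP: h => /(_ j); rewrite !mxE => <-.
  by apply: eq_bigr => i _; rewrite mxE.
apply/rowP => j; rewrite !mxE -[X in _ = X](h j) /comb; apply: eq_bigr => i _; by rewrite !mxE.
Qed.

Lemma kerw_mono N (y : 'I_N -> int -> K) L L' : (L <= L')%N ->
  (kermx (Mw y L') <= kermx (Mw y L))%MS.
Proof.
move=> hLL; apply/row_subP => i.
have /kerwP h' := row_sub i (kermx (Mw y L')).
apply/kerwP => j.
have hj : (j + (L' - L) < (L'+L').+1)%N by have := ltn_ord j; lia.
have := h' (Ordinal hj); rewrite /=.
have -> : (j + (L' - L))%N%:Z - L'%:Z = j%:Z - L%:Z :> int by lia.
by [].
Qed.

Lemma kerw_all N (y : 'I_N -> int -> K) L (c : 'rV_N) :
  (forall L', (L <= L')%N -> (c <= kermx (Mw y L'))%MS) -> forall k, comb c y k = 0.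
Proof.
move=> h k.
pose L' := maxn L (absz k).
have /kerwP h' := h L' (leq_maxl _ _).
have hj : (absz (k + L'%:Z)%R < (L'+L').+1)%N.
  rewrite /L'; lia.
have := h' (Ordinal hj); rewrite /=.
have -> : (absz (k + L'%:Z)%R)%:Z - L'%:Z = k :> int by rewrite /L'; lia.
by [].
Qed.

Lemma win_ind N (y : 'I_N -> int -> K) (hy : lin_indep y) n : forall L,
  (\rank (kermx (Mw y L)) <= n)%N ->
  exists L', forall c : 'rV_N, (c <= kermx (Mw y L'))%MS -> c = 0.
Proof.
elim: n => [|n IH] L hL.
  exists L => c; have : (kermx (Mw y L)) == 0 by rewrite -mxrank_eq0; lia.
  by move/eqP => ->; rewrite submx0 => /eqP.
case: (classic (exists L', (L <= L')%N /\
   (\rank (kermx (Mw y L')) < \rank (kermx (Mw y L)))%N)) => [[L' [_ hlt]]|hno].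
  by apply: (IH L'); lia.
exists L => c hc.
have hsub : forall L', (L <= L')%N -> (kermx (Mw y L) <= kermx (Mw y L'))%MS.
  move=> L' hLL; have hs := kerw_mono y hLL.
  rewrite -(mxrank_leqif_sup hs).2 eqn_leq mxrankS //=.
  by rewrite leqNgt; apply/negP => hlt; apply: hno; exists L'.
have hall := kerw_all (fun L' hLL => submx_trans hc (hsub L' hLL)).
apply/rowP => i; rewrite mxE.
by apply: (hy (fun i => c 0 i)) => k; apply: hall.
Qed.

Lemma window N (y : 'I_N -> int -> K) : lin_indep y ->
  exists L, forall c : 'rV_N, (forall j : 'I_(L+L).+1, comb c y (j%:Z - L%:Z) = 0) -> c = 0.
Proof.
move=> hy; have [L hL] := @win_ind N y hy _ 0 (leqnn _).
by exists L => c hc; apply: hL; apply/kerwP.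
Qed.


Lemma in_V_ext r (a : nat -> int -> K) (f g : int -> K) :
  (forall k, f k = g k) -> in_V r a f -> in_V r a g.
Proof. by move=> h hf n; rewrite -[X in _ = X](hf n); apply: eq_bigr => j _; rewrite h. Qed.

Lemma comb_V r (a : nat -> int -> K) N (c : 'rV_N) (x : 'I_N -> int -> K) :
  (forall i, in_V r a (x i)) -> in_V r a (comb c x).
Proof.
move=> hx n; rewrite /comb.
under eq_bigr do rewrite big_distrr /=.
rewrite exchange_big /=; apply: big1 => i _.
rewrite -[X in _ = X](mulr0 (c 0 i)) -[X in _ * X](hx i n) big_distrr /=.
by apply: eq_bigr => j _; rewrite mulrCA.
Qed.

Lemma trunc_p r (a : nat -> int -> K) (z : int -> K) : in_V r a z ->
  (forall k : int, 0 <= k -> k < r%:Z -> z k = 0) ->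
  in_V r a (fun k => if 0 <= k then z k else 0).
Proof.
move=> hz h0 n; have [hn|hn] := leP 0 n.
  rewrite -[X in _ = X](hz n); apply: eq_bigr => j _.
  have -> : (0 <= n + (j : nat)%:Z) = true by lia.
  by [].
apply: big1 => j _; case: ifP => hj; last by rewrite mulr0.
have := ltn_ord j => hjr.
by rewrite h0 ?mulr0 //; lia.
Qed.

Lemma trunc_m r (a : nat -> int -> K) (z : int -> K) : in_V r a z ->
  (forall k : int, 0 <= k -> k < r%:Z -> z k = 0) ->
  in_V r a (fun k => if k < 0 then z k else 0).
Proof.
move=> hz h0 n; have [hn|hn] := leP 0 n.
  apply: big1 => j _.
  have -> : (n + (j : nat)%:Z < 0) = false by lia.
  by rewrite mulr0.
rewrite -[X in _ = X](hz n); apply: eq_bigr => j _; case: ifP => hj //.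
have := ltn_ord j => hjr.
by rewrite h0 ?mulr0 //; lia.
Qed.

Lemma arith (a b c d e r m1 m2 : nat) : (e + a)%N = b -> (e <= c)%N ->
  b = (r + m1 + m2 - d)%N -> (d <= r)%N -> (a < m1)%N -> (m2 <= c)%N.
Proof. lia. Qed.

End Aux.
Unset Implicit Arguments.
Set Strict Implicit.

Theorem lemma1 (K : fieldType) (r : nat) (a : nat -> int -> K) :
  inf_dim (in_V r a) ->
  exists i0 : int,
    inf_dim (fun x => in_V r a x /\ supp_sub x (fun i => i0 <= i)) \/
    inf_dim (fun x => in_V r a x /\ supp_sub x (fun i => i <= i0)).
Proof.
move=> hinf; exists 0.
set Wp := (fun x => _ /\ supp_sub x (fun i => 0 <= i)).
set Wm := (fun x => _ /\ supp_sub x (fun i => i <= 0)).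
case: (classic (inf_dim Wp)) => [hp|hp]; first by left.
case: (classic (inf_dim Wm)) => [hm|hm]; first by right.
exfalso.
have [m1 hm1] := not_all_ex_not _ _ hp.
have [m2 hm2] := not_all_ex_not _ _ hm.
have [x [hxV hxind]] := hinf (r + m1 + m2)%N.
have [L hL] := window hxind.
pose N := (r + m1 + m2)%N.
pose X0 : 'M[K]_(N, r) := \matrix_(i, j) x i ((j : nat)%:Z).
pose xp i k := if 0 <= k then x i k else 0.
pose xm i k := if k < 0 then x i k else 0.
pose Xp := Mw xp L.
pose S0 := kermx X0.
pose S1 := (S0 :&: kermx Xp)%MS.
have hS0 : forall c : 'rV_N, (c <= S0)%MS -> forall k : int, 0 <= k -> k < r%:Z ->
    comb c x k = 0.
  move=> c; rewrite sub_kermx => /eqP /rowP h k hk0 hkr.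
  have hj : (absz k < r)%N by lia.
  have := h (Ordinal hj); rewrite !mxE => <-.
  apply: eq_bigr => i _; rewrite !mxE /=.
  by have -> : ((absz k)%:Z = k) by lia.
have hsplit : forall (c : 'rV_N) k, comb c x k = comb c xp k + comb c xm k.
  move=> c k; rewrite /comb -big_split; apply: eq_bigr => i _.
  by rewrite /= -mulrDr /xp /xm; case: leP => _; rewrite ?addr0 ?add0r.
have hWp : forall c : 'rV_N, (c <= S0)%MS -> Wp (comb c xp).
  move=> c hc; split.
    apply: in_V_ext (trunc_p (comb_V c hxV) (hS0 c hc)) => k.
    by rewrite /comb /xp; case: ifP => _ //; rewrite big1 // => i _; rewrite mulr0.
  move=> k; rewrite /comb /xp; case: leP => // _.
  by rewrite big1 ?eqxx // => i _; rewrite mulr0.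
have hWm : forall c : 'rV_N, (c <= S0)%MS -> Wm (comb c xm).
  move=> c hc; split.
    apply: in_V_ext (trunc_m (comb_V c hxV) (hS0 c hc)) => k.
    by rewrite /comb /xm; case: ifP => _ //; rewrite big1 // => i _; rewrite mulr0.
  move=> k; case: (leP k 0) => // hk; rewrite /comb /xm big1 ?eqxx // => i _.
  have -> : (k < 0) = false by lia.
  by rewrite mulr0.
pose C := (S0 :\: S1)%MS.
have hinjC : forall c : 'rV_N, (c <= C)%MS -> (forall k, comb c xp k = 0) -> c = 0.
  move=> c hc hz0.
  have h1 : (c <= S1)%MS.
    rewrite sub_capmx (submx_trans hc (diffmxSl _ _)) /=.
    by apply/kerwP => j; apply: hz0.
  have : (c <= C :&: S1)%MS by rewrite sub_capmx hc h1.
  by rewrite capmx_diff submx0 => /eqP.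
have [z [hzW hzind]] := @famA K N _ xp C Wp
  (fun c hc => hWp c (submx_trans hc (diffmxSl _ _))) hinjC.
have hr1 : (\rank C < m1)%N.
  rewrite ltnNge; apply/negP => hle; apply: hm1.
  by exists (fun i => z (widen_ord hle i)); split; [move=> i; apply: hzW | exact: subfam].
have hinj1 : forall c : 'rV_N, (c <= S1)%MS -> (forall k, comb c xm k = 0) -> c = 0.
  move=> c hc hz0; apply: hL => j.
  move: hc; rewrite sub_capmx => /andP [_ /kerwP hp'].
  by rewrite hsplit hp' hz0 addr0.
have [z' [hzW' hzind']] := @famA K N _ xm S1 Wm
  (fun c hc => hWm c (submx_trans hc (capmxSl _ _))) hinj1.
have hr2 : (m2 <= \rank S1)%N.
  have e1 := mxrank_cap_compl S0 S1.
  have e2 := mxrankS (capmxSr S0 S1).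
  have e3 := mxrank_ker X0.
  have e4 := rank_leq_col X0.
  rewrite -/C -/S0 in e1 e3; rewrite /N in e3 e4 *.
  exact: (arith e1 e2 e3 e4 hr1).
apply: hm2.
by exists (fun i => z' (widen_ord hr2 i)); split; [move=> i; apply: hzW' | exact: subfam].
Qed.
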